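(* Let $r \geq 2$, $2 \leq h \leq r$, let $k$ be a positive integer with $k \neq 2$, and let $G$ be a finite simple $r$-regular graph. If $G$ has an $h$-factor that is completely $k$-magic, then $G$ is completely $k$-magic.
   Context: $\mathbb{Z}_1 = \mathbb{Z}$ and for $k \geq 2$, $\mathbb{Z}_k$ is the integers modulo $k$. For $c \in \mathbb{Z}_k$, a graph $G$ is $c$-sum $k$-magic if there is an edge labeling $\ell : E(G) \to \mathbb{Z}_k \setminus \{0\}$ such that for every vertex $v$, $\sum_{u \in N(v)} \ell(uv) = c$ in $\mathbb{Z}_k$. $G$ is completely $k$-magic if it is $c$-sum $k$-magic for every $c \in \mathbb{Z}_k$. An $h$-factor of $G$ is an $h$-regular spanning subgraph of $G$. *)

(* Defs.v *)
From mathcomp Require Import all_boot all_order all_algebra.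
Set Implicit Arguments. Unset Strict Implicit. Unset Printing Implicit Defensive.
Import GRing.Theory Num.Theory.
Local Open Scope ring_scope.

(* Equality in Z_k: Z_1 = Z (plain equality of integers),
   Z_k = integers modulo k for k >= 2. *)
Definition eq_Zk (k : nat) (a b : int) : Prop :=
  if k == 1%N then a = b else (a = b %[mod k%:Z])%Z.

Definition simple_graph (T : finType) (e : rel T) : Prop :=
  symmetric e /\ irreflexive e.

Definition regular (T : finType) (e : rel T) (r : nat) : Prop :=
  forall v : T, #|[set u | e v u]| = r.

Definition is_factor (T : finType) (e f : rel T) (h : nat) : Prop :=
  symmetric f /\ (forall u v, f u v -> e u v) /\ regular f h.

(* c-sum k-magic: an edge labeling (represented as a function on ordered pairs
   that is symmetric on edges, i.e. a function on unordered edges) with labels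
   in Z_k \ {0} such that every vertex sum equals c in Z_k.  Elements of Z_k
   are represented by integers. *)
Definition csum_kmagic (T : finType) (e : rel T) (k : nat) (c : int) : Prop :=
  exists l : T -> T -> int,
    (forall u v, e u v -> l u v = l v u) /\
    (forall u v, e u v -> ~ eq_Zk k (l u v) 0) /\
    (forall v, eq_Zk k (\sum_(u | e v u) l v u) c).

Definition completely_kmagic (T : finType) (e : rel T) (k : nat) : Prop :=
  forall c : int, csum_kmagic e k c.

(* Main.v *)
Require Import Defs.
From mathcomp Require Import all_boot all_order all_algebra.
Import GRing.Theory Num.Theory.

Theorem theorem11 (T : finType) (e : rel T) (r h k : nat) :
  (2 <= r)%N -> (2 <= h)%N -> (h <= r)%N -> (0 < k)%N -> k <> 2%N ->
  simple_graph e -> regular e r ->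
  (exists f : rel T, is_factor e f h /\ completely_kmagic f k) ->
  completely_kmagic e k.
Proof.
move=> r2 h2 hr k0 k2 [esym eirr] ereg [f [[fsym [fe freg]] fmag]] c.
have [lf [lfs [lfnz lfsum]]] := fmag (c - (r - h)%:R)%R.
exists (fun u v => if f u v then lf u v else 1%R); split; [|split].
- move=> u v euv; rewrite fsym; case: ifP => // fvu.
  by apply: lfs; rewrite fsym.
- move=> u v euv; case: ifP => fuv; first exact: lfnz.
  rewrite /eq_Zk; case: ifP => [_ //|k1].
  have k3 : (1 < k)%N by rewrite ltn_neqAle eq_sym k1 k0.
  move=> H; have := congr1 (fun x : int => x) H.
  rewrite -[1%R]/(Posz 1) -[0%R]/(Posz 0) !modz_nat modn_small // mod0n.
  by [].
- move=> v.
  rewrite (bigID (fun u => f v u)) /=.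
  have E1 : (\sum_(u | e v u && f v u) (if f v u then lf v u else 1))%R
            = (\sum_(u | f v u) lf v u)%R.
    apply: eq_big => [u|u /andP [_ ->] //].
    by apply/andP/idP => [[]//|fvu]; split => //; exact: fe.
  have E2 : (\sum_(u | e v u && ~~ f v u) (if f v u then lf v u else 1))%R
            = ((r - h)%:R : int).
    rewrite (eq_bigr (fun _ => 1%R)); last by move=> u /andP [_ /negbTE ->].
    rewrite sumr_const.
    have := cardID [pred u | f v u] [pred u | e v u].
    have -> : #|[predI [pred u | e v u] & [pred u | f v u]]| = h.
      rewrite -(freg v) cardsE; apply: eq_card => u /=; rewrite !inE.
      by apply/andP/idP => [[]//|fvu]; split => //; exact: fe.
    have -> : #|[pred u | e v u]| = r by rewrite -(ereg v) cardsE.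
    move=> H.
    have -> : #|[pred u | e v u && ~~ f v u]| = (r - h)%N.
      rewrite -H addKn; apply: eq_card => u; by rewrite !inE /= andbC.
    by [].

  rewrite E1 E2.
  move: (lfsum v); rewrite /eq_Zk; case: ifP => _.
    by move=> ->; rewrite subrK.
  by move=> H; rewrite -modzDml H modzDml subrK.
Qed.
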